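(* The abelian category $\mathcal R$ of rational $\mathfrak{sl}(2)$-modules decomposes as the $\mathrm{Hom}$-orthogonal direct sum of the abelian subcategories of generalized rational Casimir modules: $$\mathcal R=\bigoplus_{\mu\in\mathbb{C}}\mathcal{RC}^\bullet_\mu .$$ That is, every rational module $W$ is a finite direct sum, as $\mathfrak{sl}(2)$-modules, $W=W_{\mu_1}\oplus\cdots\oplus W_{\mu_r}$ with pairwise distinct $\mu_i\in\mathbb{C}$ and $W_{\mu_i}\in\mathcal{RC}^\bullet_{\mu_i}$, and $\mathrm{Hom}_{\mathfrak{sl}(2)}(A,B)=0$ whenever $A\in\mathcal{RC}^\bullet_\mu$, $B\in\mathcal{RC}^\bullet_\nu$ with $\mu\neq\nu$. This decomposition is compatible with the coproduct decomposition $\mathcal{RC}=\coprod_{\mu\in\mathbb{C}}\mathcal{RC}_\mu$ (i.e. $\mathcal{RC}_\mu\subseteq\mathcal{RC}^\bullet_\mu$ for each $\mu$).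
   Context: $\mathfrak{sl}(2)$ has basis $L_{-1}=f$, $L_0=-\tfrac12 h$, $L_1=-e$ for a Chevalley basis $e,f,h$ ($[e,f]=h$, $[h,e]=2e$, $[h,f]=-2f$). Every $\mathfrak{sl}(2)$-module $(V,\rho)$ is a $\mathbb{C}[z]$-module via $z\cdot v=\rho(L_0)v$, and has Casimir operator $C_\rho=\rho(L_0)(\rho(L_0)-1)-\rho(L_{-1})\rho(L_1)$. A rational module is an $\mathfrak{sl}(2)$-module whose $\mathbb{C}[z]$-module structure is that of a finite-dimensional $\mathbb{C}(z)$-vector space; $\mathcal R$ is the full subcategory of $\mathfrak{sl}(2)$-modules formed by rational modules. A module is Casimir of level $\mu$ if $C_\rho=\mu\,\mathrm{Id}$, and generalized Casimir of level $\mu$ if $(C_\rho-\mu)^n=0$ for some $n\ge1$. $\mathcal{RC}_\mu$ (resp. $\mathcal{RC}^\bullet_\mu$) is the full subcategory of $\mathcal R$ of Casimir (resp. generalized Casimir) rational modules of level $\mu$, and $\mathcal{RC}$ is the full subcategory of all rational Casimir modules (of any level). *)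

(* Defs.v *)
From HB Require Import structures.
From mathcomp Require Import all_boot all_order all_algebra.
From mathcomp Require Import Rstruct.
From mathcomp.real_closed Require Import complex.
Set Implicit Arguments. Unset Strict Implicit. Unset Printing Implicit Defensive.
Import Order.TTheory GRing.Theory Num.Theory.
Local Open Scope ring_scope.

Local Open Scope complex_scope.
Definition CC_field : numClosedFieldType := Rdefinitions.R[i].
Local Close Scope complex_scope.

Record sl2mod := Sl2Mod {
  carrier :> lmodType CC_field;
  rhoE : {linear carrier -> carrier};
  rhoF : {linear carrier -> carrier};
  rhoH : {linear carrier -> carrier};
  _ : forall v, rhoE (rhoF v) - rhoF (rhoE v) = rhoH v;
  _ : forall v, rhoH (rhoE v) - rhoE (rhoH v) = 2%:R *: rhoE v;
  _ : forall v, rhoH (rhoF v) - rhoF (rhoH v) = - (2%:R *: rhoF v)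
}.

Section Defs.
Variable M : sl2mod.

Definition Lm1 (v : M) : M := rhoF M v.
Definition L0 (v : M) : M := (- (2%:R)^-1) *: rhoH M v.
Definition L1 (v : M) : M := - rhoE M v.

Definition casimir (v : M) : M := L0 (L0 v - v) - Lm1 (L1 v).

(* C[z]-module structure: z . v = rho(L0) v, so p . v = p(rho(L0)) v. *)
Definition polyact (p : {poly CC_field}) (v : M) : M :=
  \sum_(i < size p) p`_i *: iter i L0 v.

Definition submodule (S : M -> Prop) : Prop :=
  [/\ S 0,
      (forall u v, S u -> S v -> S (u + v)),
      (forall (a : CC_field) v, S v -> S (a *: v)) &
      (forall v, S v -> [/\ S (rhoE M v), S (rhoF M v) & S (rhoH M v)])].

(* The submodule S (with the restricted action) is rational: its C[z]-module
   structure is that of a C(z)-vector space (every nonzero polynomial acts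
   bijectively on S) which is finite dimensional (finitely spanned over C(z):
   every v in S satisfies p.v = sum_i q_i.b_i for some p <> 0). *)
Definition rational_on (S : M -> Prop) : Prop :=
  submodule S /\
  (forall p : {poly CC_field}, p != 0 ->
     (forall v, S v -> polyact p v = 0 -> v = 0) /\
     (forall w, S w -> exists v, S v /\ polyact p v = w)) /\
  (exists (n : nat) (b : 'I_n -> M), (forall i, S (b i)) /\
     forall v, S v -> exists (p : {poly CC_field}) (q : 'I_n -> {poly CC_field}),
       p != 0 /\ polyact p v = \sum_(i < n) polyact (q i) (b i)).

Definition casimir_on (mu : CC_field) (S : M -> Prop) : Prop :=
  forall v, S v -> casimir v = mu *: v.

Definition gen_casimir_on (mu : CC_field) (S : M -> Prop) : Prop :=
  exists n : nat, (0 < n)%N /\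
    forall v, S v -> iter n (fun w => casimir w - mu *: w) v = 0.

End Defs.

Definition whole (M : sl2mod) : M -> Prop := fun _ => True.
Definition rational (M : sl2mod) : Prop := @rational_on M (@whole M).
Definition in_RC (mu : CC_field) (M : sl2mod) : Prop :=
  rational M /\ @casimir_on M mu (@whole M).
Definition in_RCgen (mu : CC_field) (M : sl2mod) : Prop :=
  rational M /\ @gen_casimir_on M mu (@whole M).

Definition sl2hom (A B : sl2mod) (phi : {linear A -> B}) : Prop :=
  forall v, [/\ phi (rhoE A v) = rhoE B (phi v),
                phi (rhoF A v) = rhoF B (phi v) &
                phi (rhoH A v) = rhoH B (phi v)].

(* Main.v *)
Require Import Defs.
From HB Require Import structures.
From mathcomp Require Import all_boot all_order all_algebra.
From mathcomp Require Import Rstruct.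
From mathcomp.real_closed Require Import complex.
From mathcomp Require Import ring.
From Stdlib Require Import Classical.
Set Implicit Arguments. Unset Strict Implicit. Unset Printing Implicit Defensive.
Import Order.TTheory GRing.Theory Num.Theory.
Local Open Scope ring_scope.
Arguments L0 : simpl never.
Arguments casimir : simpl never.
Arguments Lm1 : simpl never.
Arguments L1 : simpl never.
Arguments polyact : simpl never.
Lemma relEF (M : sl2mod) (v : M) : rhoE M (rhoF M v) - rhoF M (rhoE M v) = rhoH M v.
Proof. by case: M v => ? ? ? ? ? ? ? v. Qed.
Lemma relHE (M : sl2mod) (v : M) : rhoH M (rhoE M v) - rhoE M (rhoH M v) = 2%:R *: rhoE M v.
Proof. by case: M v => ? ? ? ? ? ? ? v. Qed.
Lemma relHF (M : sl2mod) (v : M) : rhoH M (rhoF M v) - rhoF M (rhoH M v) = - (2%:R *: rhoF M v).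
Proof. by case: M v => ? ? ? ? ? ? ? v. Qed.

Lemma two_neq0 : (2%:R : CC_field) != 0.
Proof. by rewrite pnatr_eq0. Qed.

Lemma zmod_aux (V : zmodType) (x y d : V) : x - y - y + (d + (y + y)) = x + d.
Proof. by rewrite (addrC d) !addrA !subrK. Qed.

Section Ops.
Variable W : sl2mod.
Local Notation E := (rhoE W).
Local Notation F := (rhoF W).
Local Notation H := (rhoH W).
Local Notation L0 := (@L0 W).
Local Notation C := (@casimir W).

Lemma L0D (u v : W) : L0 (u + v) = L0 u + L0 v.
Proof. by rewrite /L0 linearD scalerDr. Qed.
Lemma L0Z (a : CC_field) (v : W) : L0 (a *: v) = a *: L0 v.
Proof. by rewrite /L0 linearZ !scalerA mulrC. Qed.
Lemma L00 : L0 0 = 0 :> W.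
Proof. by rewrite /L0 linear0 scaler0. Qed.
Lemma L0N (v : W) : L0 (- v) = - L0 v.
Proof. by rewrite -scaleN1r L0Z scaleN1r. Qed.
Lemma L0B (u v : W) : L0 (u - v) = L0 u - L0 v.
Proof. by rewrite L0D L0N. Qed.

Lemma HL0 (v : W) : H v = - (2%:R *: L0 v).
Proof. by rewrite /L0 scalerA mulrN mulfV ?two_neq0 // scaleN1r opprK. Qed.

Lemma L0_F (v : W) : L0 (F v) = F (L0 v) + F v.
Proof.
have h := relHF v; move/eqP: h; rewrite subr_eq => /eqP h.
by rewrite /L0 h scalerDr scalerN scalerA mulNr mulVf ?two_neq0 // scaleN1r opprK linearZ /= addrC.
Qed.

Lemma L0_E (v : W) : L0 (E v) = E (L0 v) - E v.
Proof.
have h := relHE v; move/eqP: h; rewrite subr_eq => /eqP h.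
by rewrite /L0 h scalerDr scalerA mulNr mulVf ?two_neq0 // scaleN1r linearZ /= addrC.
Qed.

Lemma E_L0 (v : W) : E (L0 v) = L0 (E v) + E v.
Proof. by rewrite L0_E subrK. Qed.
Lemma F_L0 (v : W) : F (L0 v) = L0 (F v) - F v.
Proof. by rewrite L0_F addrK. Qed.

Lemma EF (v : W) : E (F v) = F (E v) - 2%:R *: L0 v.
Proof.
have h := relEF v; move/eqP: h; rewrite subr_eq => /eqP ->.
by rewrite HL0 addrC.
Qed.

Lemma FE' (v : W) : F (E v) = E (F v) + 2%:R *: L0 v.
Proof. by rewrite EF subrK. Qed.

Lemma casE (v : W) : C v = L0 (L0 v) - L0 v + F (E v).
Proof. by rewrite /casimir /Lm1 /L1 L0B linearN opprK. Qed.

Lemma C_L0 (v : W) : C (L0 v) = L0 (C v).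
Proof.
rewrite !casE !L0D L0N; congr (_ + _).
by rewrite E_L0 linearD /= F_L0 subrK.
Qed.

Lemma C_F (v : W) : C (F v) = F (C v).
Proof.
rewrite !casE EF scaler_nat !linearD !linearN !L0_F L0D !L0_F addrK.
by rewrite [F (F (E v)) + _]addrC -!addrA addNKr.
Qed.

Lemma C_E (v : W) : C (E v) = E (C v).
Proof.
rewrite !casE [F (E (E v))]FE' !linearD !linearN scaler_nat mulr2n !L0_E L0B !L0_E.
by rewrite zmod_aux.
Qed.
End Ops.

Lemma zmod_idem (V : zmodType) (x : V) : x = x + x -> x = 0.
Proof. by move=> h; rewrite -[LHS](addrK x x) -h subrr. Qed.

Lemma size_map_le (aR rR : nzSemiRingType) (f : aR -> rR) (p : {poly aR}) :
  (size (map_poly f p) <= size p)%N.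
Proof. exact: size_poly. Qed.

Record actOK (R : comNzRingType) (V : lmodType CC_field) (A : R -> V -> V) (T : V -> V) : Prop := ActOK {
  okA0 : forall v, A 0 v = 0;
  okAD : forall r s v, A (r + s) v = A r v + A s v;
  okAvD : forall r u v, A r (u + v) = A r u + A r v;
  okAvZ : forall r (a : CC_field) v, A r (a *: v) = a *: A r v;
  okA1 : forall v, A 1 v = v;
  okAM : forall r s v, A (r * s) v = A r (A s v);
  okAT : forall r v, A r (T v) = T (A r v);
  okTD : forall u v, T (u + v) = T u + T v;
  okTZ : forall (a : CC_field) v, T (a *: v) = a *: T v }.

Definition act (R : comNzRingType) (V : lmodType CC_field) (A : R -> V -> V) (T : V -> V)
  (p : {poly R}) (v : V) : V := \sum_(i < size p) A p`_i (iter i T v).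
Arguments act : simpl never.

Section Act.
Variables (R : comNzRingType) (V : lmodType CC_field) (A : R -> V -> V) (T : V -> V).
Hypothesis hA : actOK A T.

Lemma okAv0 r : A r 0 = 0.
Proof. by apply: zmod_idem; rewrite -(okAvD hA) addr0. Qed.
Lemma okAN r v : A (- r) v = - A r v.
Proof. by apply/eqP; rewrite -subr_eq0 opprK -(okAD hA) addNr (okA0 hA). Qed.
Lemma okAsum r (I : Type) (s : seq I) (P : pred I) (f : I -> V) :
  A r (\sum_(i <- s | P i) f i) = \sum_(i <- s | P i) A r (f i).
Proof. by apply: (big_morph (A r)); [exact: (okAvD hA) | exact: okAv0]. Qed.
Lemma okAsumr (I : Type) (s : seq I) (P : pred I) (f : I -> R) v :
  A (\sum_(i <- s | P i) f i) v = \sum_(i <- s | P i) A (f i) v.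
Proof. by apply: (big_morph (fun r => A r v)); [move=> ? ?; exact: (okAD hA) | exact: (okA0 hA)]. Qed.
Lemma okT0 : T 0 = 0.
Proof. by apply: zmod_idem; rewrite -(okTD hA) addr0. Qed.
Lemma iterTD n u v : iter n T (u + v) = iter n T u + iter n T v.
Proof. by elim: n => //= n ->; rewrite (okTD hA). Qed.
Lemma iterTZ n a v : iter n T (a *: v) = a *: iter n T v.
Proof. by elim: n => //= n ->; rewrite (okTZ hA). Qed.
Lemma iterT0 n : iter n T 0 = 0.
Proof. by elim: n => //= n ->; rewrite okT0. Qed.
Lemma iterAT n r v : A r (iter n T v) = iter n T (A r v).
Proof. by elim: n => //= n <-; rewrite (okAT hA). Qed.

Lemma act_bound n (p : {poly R}) v : (size p <= n)%N ->
  act A T p v = \sum_(i < n) A p`_i (iter i T v).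
Proof.
move=> hn; rewrite /act (big_ord_widen n (fun i => A p`_i (iter i T v))) //.
rewrite big_mkcond; apply: eq_bigr => i _; case: ifP => // h.
by rewrite nth_default ?(okA0 hA) // leqNgt h.
Qed.

Lemma act0 v : act A T 0 v = 0.
Proof. by rewrite /act size_poly0 big_ord0. Qed.

Lemma actD (p q : {poly R}) v : act A T (p + q) v = act A T p v + act A T q v.
Proof.
set n := maxn (size p) (size q).
rewrite !(@act_bound n) ?leq_maxl ?leq_maxr ?size_polyD //.
by rewrite -big_split; apply: eq_bigr => i _; rewrite coefD (okAD hA).
Qed.

Lemma actN (p : {poly R}) v : act A T (- p) v = - act A T p v.
Proof. by apply/eqP; rewrite -subr_eq0 opprK -actD addNr act0. Qed.

Lemma actB (p q : {poly R}) v : act A T (p - q) v = act A T p v - act A T q v.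
Proof. by rewrite actD actN. Qed.

Lemma actsum (I : Type) (s : seq I) (P : pred I) (f : I -> {poly R}) v :
  act A T (\sum_(i <- s | P i) f i) v = \sum_(i <- s | P i) act A T (f i) v.
Proof. by apply: (big_morph (fun p => act A T p v)); [move=> ? ?; exact: actD | exact: act0]. Qed.

Lemma actC c v : act A T c%:P v = A c v.
Proof. by rewrite (@act_bound 1) ?size_polyC_leq1 // big_ord1 coefC. Qed.

Lemma act1 v : act A T 1 v = v.
Proof. by rewrite actC (okA1 hA). Qed.

Lemma act_vD (p : {poly R}) u v : act A T p (u + v) = act A T p u + act A T p v.
Proof. by rewrite /act -big_split; apply: eq_bigr => i _; rewrite iterTD (okAvD hA). Qed.

Lemma act_v0 (p : {poly R}) : act A T p 0 = 0.
Proof. by rewrite /act big1 // => i _; rewrite iterT0 okAv0. Qed.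

Lemma act_vZ (p : {poly R}) a v : act A T p (a *: v) = a *: act A T p v.
Proof. by rewrite /act scaler_sumr; apply: eq_bigr => i _; rewrite iterTZ (okAvZ hA). Qed.

Lemma act_vN (p : {poly R}) v : act A T p (- v) = - act A T p v.
Proof. by rewrite -scaleN1r act_vZ scaleN1r. Qed.

Lemma act_vB (p : {poly R}) u v : act A T p (u - v) = act A T p u - act A T p v.
Proof. by rewrite act_vD act_vN. Qed.

Lemma act_vsum (p : {poly R}) (I : Type) (s : seq I) (P : pred I) (f : I -> V) :
  act A T p (\sum_(i <- s | P i) f i) = \sum_(i <- s | P i) act A T p (f i).
Proof. by apply: (big_morph (act A T p)); [exact: act_vD | exact: act_v0]. Qed.

Lemma act_mulX (p : {poly R}) v : act A T (p * 'X) v = act A T p (T v).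
Proof.
rewrite (@act_bound (size p).+1); last first.
  by rewrite (leq_trans (size_polyMleq _ _)) // size_polyX addn2.
rewrite big_ord_recl coefMX eqxx (okA0 hA) add0r /act; apply: eq_bigr => i _.
by rewrite coefMX /= add0n -iterS iterSr.
Qed.

Lemma act_CM c (p : {poly R}) v : act A T (c%:P * p) v = A c (act A T p v).
Proof.
rewrite (@act_bound (size p)); last by rewrite mul_polyC size_scale_leq.
by rewrite /act okAsum; apply: eq_bigr => i _; rewrite coefCM (okAM hA).
Qed.

Lemma act_map (S : V -> V) (f : R -> R) (p : {poly R}) v :
  f 0 = 0 -> (forall u w, S (u + w) = S u + S w) ->
  (forall r u, S (A r u) = A (f r) (S u)) -> (forall u, S (T u) = T (S u)) ->
  S (act A T p v) = act A T (map_poly f p) (S v).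
Proof.
move=> f0 SD SA ST.
have S0 : S 0 = 0 by apply: zmod_idem; rewrite -SD addr0.
rewrite (@act_bound (size p) (map_poly f p)); last exact: size_map_le.
rewrite /act (big_morph S SD S0); apply: eq_bigr => i _.
rewrite SA coef_map_id0 //; congr (A _ _).
by elim: (nat_of_ord i) => //= n IH; rewrite ST IH.
Qed.

Lemma act_comm (S : V -> V) (p : {poly R}) v :
  (forall u w, S (u + w) = S u + S w) ->
  (forall r u, S (A r u) = A r (S u)) -> (forall u, S (T u) = T (S u)) ->
  S (act A T p v) = act A T p (S v).
Proof. by move=> SD SA ST; rewrite (@act_map S id) // map_poly_id. Qed.

Lemma act_T (p : {poly R}) v : act A T p (T v) = T (act A T p v).
Proof.
by rewrite (@act_comm T) //; [exact: (okTD hA) | move=> r u; rewrite (okAT hA)].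
Qed.

Lemma actM (p q : {poly R}) v : act A T (p * q) v = act A T p (act A T q v).
Proof.
elim/poly_ind: p v => [|p c IH] v; first by rewrite mul0r !act0.
rewrite mulrDl -mulrA (mulrC 'X) mulrA actD act_mulX IH act_CM.
by rewrite actD act_mulX actC act_T.
Qed.

Lemma actX v : act A T 'X v = T v.
Proof. by rewrite -(mul1r 'X) act_mulX act1. Qed.

Lemma act_comp (S : V -> V) (q p : {poly R}) v :
  (forall u w, S (u + w) = S u + S w) ->
  (forall r u, S (A r u) = A r (S u)) -> (forall u, S (T u) = act A T q (S u)) ->
  S (act A T p v) = act A T (p \Po q) (S v).
Proof.
move=> SD SA ST.
have S0 : S 0 = 0 by apply: zmod_idem; rewrite -SD addr0.
elim/poly_ind: p v => [|p c IH] v; first by rewrite comp_poly0 !act0.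
by rewrite comp_poly_MXaddC !actD act_mulX SD IH ST actM !actC SA.
Qed.

End Act.

Definition scaleA (V : lmodType CC_field) (c : CC_field) (v : V) : V := c *: v.
Arguments scaleA : simpl never.

Lemma okScale (V : lmodType CC_field) (T : V -> V) :
  (forall u v, T (u + v) = T u + T v) -> (forall (a : CC_field) v, T (a *: v) = a *: T v) ->
  actOK (@scaleA V) T.
Proof.
move=> TD TZ; split; rewrite /scaleA.
- by move=> v; rewrite scale0r.
- by move=> r s v; rewrite scalerDl.
- by move=> r u v; rewrite scalerDr.
- by move=> r a v; rewrite !scalerA mulrC.
- by move=> v; rewrite scale1r.
- by move=> r s v; rewrite scalerA.
- by move=> r v; rewrite TZ.
- exact: TD.
- exact: TZ.
Qed.

Notation sh z := (comp_poly ('X + z%:P)).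

Section Inst.
Variable W : sl2mod.
Local Notation E := (rhoE W).
Local Notation F := (rhoF W).
Local Notation H := (rhoH W).
Local Notation L0 := (@L0 W).
Local Notation C := (@casimir W).
Local Notation pa := (@polyact W).

Lemma CD (u v : W) : C (u + v) = C u + C v.
Proof.
rewrite !casE !L0D linearD /= !linearD /=.
by rewrite [_ + (- _ - _)]addrACA [LHS]addrACA.
Qed.
Lemma CZ (a : CC_field) (v : W) : C (a *: v) = a *: C v.
Proof. by rewrite !casE !L0Z [E (a *: v)]linearZ /= [F (a *: _)]linearZ /= scalerDr scalerBr. Qed.

Lemma okL0 : actOK (@scaleA W) L0.
Proof. apply: okScale; [exact: L0D | exact: L0Z]. Qed.
Lemma okCs : actOK (@scaleA W) C.
Proof. apply: okScale; [exact: CD | exact: CZ]. Qed.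

Lemma paE p v : pa p v = act (@scaleA W) L0 p v.
Proof. by []. Qed.

Lemma C_pa p v : C (pa p v) = pa p (C v).
Proof.
rewrite !paE (@act_comm _ _ _ _ okL0) //; first exact: CD.
  by move=> r u; rewrite /scaleA CZ.
by move=> u; rewrite C_L0.
Qed.

Lemma okPC : actOK pa C.
Proof.
split.
- by move=> v; rewrite paE act0.
- by move=> r s v; rewrite !paE (actD okL0).
- by move=> r u v; rewrite !paE (act_vD okL0).
- by move=> r a v; rewrite !paE (act_vZ okL0).
- by move=> v; rewrite paE (act1 okL0).
- by move=> r s v; rewrite !paE (actM okL0).
- by move=> r v; rewrite C_pa.
- exact: CD.
- exact: CZ.
Qed.

Lemma pa_XsubC (c : CC_field) v : pa ('X - c%:P) v = L0 v - c *: v.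
Proof. by rewrite paE (actB okL0) (actX okL0) (actC okL0). Qed.
Lemma pa_XaddC (c : CC_field) v : pa ('X + c%:P) v = L0 v + c *: v.
Proof. by rewrite paE (actD okL0) (actX okL0) (actC okL0). Qed.

Lemma F_pa p v : F (pa p v) = pa (sh (-1) p) (F v).
Proof.
rewrite !paE (@act_comp _ _ _ _ okL0 F ('X + (-1)%:P)) //.
- by move=> u w; rewrite linearD.
- by move=> r u; rewrite /scaleA linearZ.
- by move=> u; rewrite -paE pa_XaddC F_L0 scaleN1r.
Qed.

Lemma E_pa p v : E (pa p v) = pa (sh 1 p) (E v).
Proof.
rewrite !paE (@act_comp _ _ _ _ okL0 E ('X + 1%:P)) //.
- by move=> u w; rewrite linearD.
- by move=> r u; rewrite /scaleA linearZ.
- by move=> u; rewrite -paE pa_XaddC E_L0 scale1r.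
Qed.

Definition act2 (P : {poly {poly CC_field}}) (v : W) : W := act pa C P v.

Lemma F_act2 P v : F (act2 P v) = act2 (map_poly (sh (-1)) P) (F v).
Proof.
rewrite /act2 (@act_map _ _ _ _ okPC F (sh (-1))) //.
- by rewrite comp_poly0.
- by move=> u w; rewrite linearD.
- by move=> r u; rewrite F_pa.
- by move=> u; rewrite C_F.
Qed.

Lemma E_act2 P v : E (act2 P v) = act2 (map_poly (sh 1) P) (E v).
Proof.
rewrite /act2 (@act_map _ _ _ _ okPC E (sh 1)) //.
- by rewrite comp_poly0.
- by move=> u w; rewrite linearD.
- by move=> r u; rewrite E_pa.
- by move=> u; rewrite C_E.
Qed.

Definition aZ : {poly CC_field} := 'X * ('X - 1%:P).
Definition bZ : {poly CC_field} := 'X * ('X + 1%:P).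

Lemma act2_a v : act2 ('X - aZ%:P) v = F (E v).
Proof.
rewrite /act2 (actB okPC) (actX okPC) (actC okPC) /aZ paE (actM okL0).
rewrite (actX okL0) (actB okL0) (actX okL0) (actC okL0) /scaleA scale1r.
by rewrite {1}/casimir addrAC subrr add0r /Lm1 /L1 linearN opprK.
Qed.

Lemma act2_b v : act2 ('X - bZ%:P) v = E (F v).
Proof.
rewrite /act2 (actB okPC) (actX okPC) (actC okPC) /bZ paE (actM okL0).
rewrite (actX okL0) (actD okL0) (actX okL0) (actC okL0) /scaleA scale1r.
rewrite casE EF scaler_nat mulr2n L0D.
by rewrite !opprD addrACA [L0 (L0 v) - _ - _]addrAC subrr add0r addrCA.
Qed.

End Inst.

Lemma shK1 (p : {poly CC_field}) : sh (-1) (sh 1 p) = p.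
Proof. by rewrite polyCN -[in RHS](comp_polyXaddC_K p 1). Qed.
Lemma shK2 (p : {poly CC_field}) : sh 1 (sh (-1) p) = p.
Proof. by rewrite -[in RHS](comp_polyXaddC_K p (-1)) polyCN opprK. Qed.

Lemma horner_sh z (p : {poly CC_field}) x : (sh z p).[x] = p.[x + z].
Proof. by rewrite horner_comp hornerD hornerX hornerC. Qed.

Lemma sh_b : sh (-1) bZ = aZ.
Proof.
rewrite /aZ /bZ comp_polyM comp_polyD !comp_polyX comp_polyC polyCN.
by rewrite -addrA addNr addr0 mulrC.
Qed.

Lemma ex_minP (P : nat -> Prop) : (exists n, P n) ->
  exists n, P n /\ forall k, (k < n)%N -> ~ P k.
Proof.
move=> [n Pn]; elim/ltn_ind: n Pn => n IH Pn.
case: (classic (exists k, (k < n)%N /\ P k)) => [[k [lt Pk]]|nh].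
  exact: IH lt Pk.
by exists n; split=> // k lt Pk; apply: nh; exists k.
Qed.

Lemma good_start (q : {poly CC_field}) : q != 0 ->
  exists t, forall k : nat, q.[t + k%:R] != 0.
Proof.
move=> nq; apply: NNPP => H.
have H2 : forall j : 'I_(size q), exists k : nat, q.['i * (val j)%:R + k%:R] = 0.
  move=> j; apply: NNPP => Hj; apply: H; exists ('i * (val j)%:R) => k.
  by apply/eqP => hk; apply: Hj; exists k.
have [kf hkf] := fin_all_exists H2.
pose rs := [seq ('i : CC_field) * (val j)%:R + (kf j)%:R | j <- enum 'I_(size q)].
have : (size rs < size q)%N.
  apply: max_poly_roots => //.
    by apply/allP => x /mapP [j _ ->]; apply/rootP; exact: hkf.
  rewrite map_inj_uniq ?enum_uniq // => j1 j2 /(congr1 (fun x => 'Im x)).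
  rewrite ![_ + (kf _)%:R]addrC !Im_rect ?realn // => /eqP.
  by rewrite eqr_nat => /eqP /val_inj.
by rewrite size_map size_enum_ord ltnn.
Qed.

Lemma shift_const (q : {poly CC_field}) : q != 0 -> exists t, q.[t] != 0 /\
  forall p, q * sh (-1) p = sh (-1) q * p -> p = (p.[t] / q.[t]) *: q.
Proof.
move=> nq; have [t ht] := good_start nq.
have qt : q.[t] != 0 by move: (ht 0%N); rewrite addr0.
exists t; split=> // p hp.
set c := p.[t] / q.[t]; set h := p - c *: q.
have hh : q * sh (-1) h = sh (-1) q * h.
  rewrite /h comp_polyB comp_polyZ.
  apply/eqP; rewrite -subr_eq0; apply/eqP.
  transitivity (q * sh (-1) p - sh (-1) q * p); last by rewrite hp subrr.
  rewrite -!mul_polyC; ring.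
have h0 : h.[t] = 0 by rewrite /h hornerD hornerN hornerZ /c mulfVK // subrr.
have hk : forall k : nat, h.[t + k%:R] = 0.
  elim=> [|k IH]; first by rewrite addr0.
  have := congr1 (fun r => r.[t + k.+1%:R]) hh.
  rewrite !hornerM !horner_sh -natr1 addrA addrK IH mulr0 => /esym /eqP.
  by rewrite mulf_eq0 (negbTE (ht k)) /= => /eqP.
have hz : h = 0.
  apply: contraTeq isT => nh.
  have : (size [seq (t + k%:R)%R | k <- iota 0 (size h)] < size h)%N.
    apply: max_poly_roots => //.
      by apply/allP => x /mapP [k _ ->]; apply/rootP; exact: hk.
    rewrite map_inj_uniq ?iota_uniq // => k1 k2 /addrI /eqP.
    by rewrite eqr_nat => /eqP.
  by rewrite size_map size_iota ltnn.
by apply/eqP; rewrite -subr_eq0 -/h hz.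
Qed.

Lemma size_leS (R : nzRingType) (p : {poly R}) n :
  (size p <= n.+1)%N -> p`_n = 0 -> (size p <= n)%N.
Proof.
move=> h1 h2; rewrite leqNgt; apply/negP => h3.
have e : size p = n.+1 by apply/eqP; rewrite eqn_leq h1 h3.
have : lead_coef p = 0 by rewrite lead_coefE e.
by move/eqP; rewrite lead_coef_eq0 => /eqP p0; move: e; rewrite p0 size_poly0.
Qed.

Lemma coef_neq0_size (R : nzRingType) (p : {poly R}) n : p`_n != 0 -> (n < size p)%N.
Proof. by apply: contraR; rewrite -leqNgt => h; rewrite nth_default. Qed.

Section StepB.
Local Notation RR := {poly CC_field}.
Variable I : {poly RR} -> Prop.
Hypothesis ID : forall p q, I p -> I q -> I (p + q).
Hypothesis IM : forall p q, I q -> I (p * q).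
Hypothesis Iinj : forall (c : RR) p, c != 0 -> I (c%:P * p) -> I p.
Hypothesis Ia : forall p, I p -> I (('X - aZ%:P) * map_poly (sh (-1)) p).
Hypothesis Ib : forall p, I p -> I (('X - bZ%:P) * map_poly (sh 1) p).

Lemma IB p q : I p -> I q -> I (p - q).
Proof. by move=> hp hq; apply: ID => //; rewrite -mulN1r; apply: IM. Qed.

Section Inner.
Variables (Phi : {poly RR}) (m : nat).
Hypotheses (IPhi : I Phi) (sPhi : size Phi = m.+1).
Hypothesis minm : forall Psi, I Psi -> (size Psi < m.+1)%N -> Psi = 0.
Hypothesis mind : forall Psi, I Psi -> size Psi = m.+1 ->
  (size (lead_coef Phi) <= size (lead_coef Psi))%N.

Let l := lead_coef Phi.
Lemma lE : l = Phi`_m. Proof. by rewrite /l lead_coefE sPhi. Qed.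
Lemma Phi_nz : Phi != 0. Proof. by rewrite -size_poly_gt0 sPhi. Qed.
Lemma l_nz : l != 0. Proof. by rewrite /l lead_coef_eq0 Phi_nz. Qed.

Lemma L2 Psi : I Psi -> (size Psi <= m.+1)%N -> exists s, Psi = s%:P * Phi.
Proof.
move=> IPsi hs; case: (ltnP (size Psi) m.+1) => h.
  by exists 0; rewrite mul0r; apply: minm.
have e : size Psi = m.+1 by apply/eqP; rewrite eqn_leq hs h.
set mu := lead_coef Psi; set s := mu %/ l; exists s.
set Psi' := Psi - s%:P * Phi.
have IP' : I Psi' by apply: IB => //; apply: IM.
have sP' : (size Psi' <= m.+1)%N.
  rewrite (leq_trans (size_polyD _ _)) // geq_max hs size_polyN mul_polyC.
  by rewrite (leq_trans (size_scale_leq _ _)) ?sPhi.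
have cP' : Psi'`_m = mu %% l.
  have em : Psi`_m = mu by rewrite /mu lead_coefE e.
  by rewrite /Psi' coefB coefCM -lE em {1}(divp_eq mu l) -/s addrAC subrr add0r.
have [r0|rn0] := eqVneq (mu %% l) 0.
  have : Psi' = 0 by apply: minm => //; rewrite ltnS size_leS // cP'.
  by move/eqP; rewrite subr_eq0 => /eqP.
have sP'' : size Psi' = m.+1.
  by apply/eqP; rewrite eqn_leq sP' coef_neq0_size // cP'.
have := mind IP' sP''.
by rewrite (lead_coefE Psi') sP'' /= cP' -/l leqNgt ltn_modp l_nz.
Qed.

Lemma sh_inj (z : CC_field) : injective (sh z).
Proof.
move=> p q e; rewrite -(comp_polyXaddC_K p z) -(comp_polyXaddC_K q z).
by congr (_ \Po _).
Qed.

Lemma Rrel (z : CC_field) (c : RR) :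
  I (('X - c%:P) * map_poly (sh z) Phi) ->
  exists t, l%:P * (('X - c%:P) * map_poly (sh z) Phi) = ((sh z l)%:P * 'X + t%:P) * Phi.
Proof.
move=> h; set PS := map_poly (sh z) Phi.
have sPS : size PS = m.+1 by rewrite size_map_inj_poly ?comp_poly0 //; exact: sh_inj.
set G := l%:P * (('X - c%:P) * PS) - (sh z l)%:P * ('X * Phi).
have IG : I G by apply: IB; apply: IM => //; apply: IM.
have sG : (size G <= m.+1)%N.
  apply: size_leS.
    rewrite (leq_trans (size_polyD _ _)) // geq_max size_polyN !mul_polyC.
    by rewrite !(leq_trans (size_scale_leq _ _)) // (leq_trans (size_polyMleq _ _)) //
      ?size_XsubC ?size_polyX ?sPS ?sPhi.
  rewrite coefB !coefCM mulrBl coefB coefXM coefCM !coef_map /= coefXM /=.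
  rewrite -lE [Phi`_m.+1]nth_default ?sPhi // comp_poly0 mulr0 subr0.
  by rewrite mulrC subrr.
have [t ht] := L2 IG sG; exists t.
apply/eqP; rewrite -subr_eq0; apply/eqP.
transitivity (G - t%:P * Phi); last by rewrite ht subrr.
rewrite /G; ring.
Qed.

Lemma K_gen (a b : RR) : I (('X - a%:P) * map_poly (sh (-1)) Phi) ->
  I (('X - b%:P) * map_poly (sh 1) Phi) -> sh (-1) b = a ->
  l%:P * map_poly (sh (-1)) Phi = (sh (-1) l)%:P * Phi.
Proof.
move=> Ia' Ib' hab.
set PS := map_poly (sh (-1)) Phi.
have [t R1] := Rrel Ia'.
have [s R2] := Rrel Ib'.
have R2' := congr1 (map_poly (sh (-1))) R2.
rewrite !rmorphM /= map_polyXsubC rmorphD /= !map_polyC rmorphM /= map_polyC map_polyX /= (shK1 l) hab in R2'.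
have e : map_poly (sh (-1)) (map_poly (sh 1) Phi) = Phi.
  by rewrite -map_poly_comp map_poly_id // => x _ /=; rewrite shK1.
rewrite e in R2'.
have PSnz : PS != 0.
  by rewrite -size_poly_gt0 size_map_inj_poly ?comp_poly0 ?sPhi //; exact: sh_inj.
have eq0 : ((l%:P * (sh (-1) l)%:P) * ('X - a%:P)^+2 -
   ((sh (-1) l)%:P * 'X + t%:P) * (l%:P * 'X + (sh (-1) s)%:P)) * (Phi * PS) = 0.
  transitivity (l%:P * (('X - a%:P) * PS) * ((sh (-1) l)%:P * (('X - a%:P) * Phi))
    - ((sh (-1) l)%:P * 'X + t%:P) * Phi * ((l%:P * 'X + (sh (-1) s)%:P) * PS)).
    rewrite -/PS; ring.
  by rewrite R1 R2' subrr.
move/eqP: eq0; rewrite mulf_eq0 mulf_eq0 (negbTE Phi_nz) (negbTE PSnz) !orbF => /eqP eq1.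
have := congr1 (fun q => q.[a]) eq1.
rewrite !hornerE /= subrr !mulr0 sub0r => /eqP.
rewrite oppr_eq0 mulf_eq0 !addr_eq0 => /orP [] /eqP e1.
  have e2 : t = - (sh (-1) l * a) by rewrite e1 opprK.
  rewrite e2 (polyCN (sh (-1) l * a)) in R1.
  have : ('X - a%:P) * (l%:P * PS - (sh (-1) l)%:P * Phi) = 0.
    transitivity (l%:P * (('X - a%:P) * PS) - ((sh (-1) l)%:P * 'X + - (sh (-1) l * a)%:P) * Phi).
      rewrite polyCM; ring.
    by rewrite R1 subrr.
  by move/eqP; rewrite mulf_eq0 polyXsubC_eq0 /= subr_eq0 => /eqP.
have e2 : sh (-1) s = - (l * a) by rewrite e1 opprK.
rewrite e2 (polyCN (l * a)) in R2'.
have : ('X - a%:P) * ((sh (-1) l)%:P * Phi - l%:P * PS) = 0.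
  transitivity ((sh (-1) l)%:P * (('X - a%:P) * Phi) - (l%:P * 'X + - (l * a)%:P) * PS).
    rewrite polyCM; ring.
  by rewrite R2' subrr.
by move/eqP; rewrite mulf_eq0 polyXsubC_eq0 /= subr_eq0 => /eqP ->.
Qed.

Lemma stepB_final : exists P : {poly CC_field}, P != 0 /\ I P^:P.
Proof using ID IM Iinj Ia Ib IPhi sPhi minm mind.
have KK := K_gen (Ia IPhi) (Ib IPhi) sh_b.
have [t0 [lt0 hsc]] := shift_const l_nz.
pose P := \poly_(i < m.+1) ((Phi`_i).[t0] / l.[t0]).
exists P; split.
  apply/eqP => P0; have := congr1 (fun q : {poly CC_field} => q`_m) P0.
  by rewrite /= coef_poly ltnSn coef0 -lE divff //; apply/eqP; rewrite oner_eq0.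
have ePhi : Phi = l%:P * P^:P.
  apply/polyP => k; rewrite coefCM coef_map /= coef_poly; case: ltnP => hk.
    rewrite {1}(hsc (Phi`_k)); first by rewrite -mul_polyC mulrC.
    by have := congr1 (fun q : {poly RR} => q`_k) KK; rewrite /= !coefCM coef_map.
  by rewrite nth_default ?sPhi // mulr0.
by apply: (Iinj l_nz); rewrite -ePhi.
Qed.

End Inner.

Lemma stepB : (exists p, p != 0 /\ I p) -> exists P : {poly CC_field}, P != 0 /\ I P^:P.
Proof using ID IM Iinj Ia Ib.
move=> ex.
have [n0 [[Psi0 [nz0 [I0 s0]]] minn]] :=
  ex_minP (P := fun n => exists Psi, Psi != 0 /\ I Psi /\ size Psi = n)
    (let: ex_intro p (conj nz Ip) := ex in ex_intro _ (size p) (ex_intro _ p (conj nz (conj Ip erefl)))).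
have [d [[Phi [IPhi [sPhi dPhi]]] mind]] :=
  ex_minP (P := fun d => exists Psi, I Psi /\ size Psi = n0 /\ size (lead_coef Psi) = d)
    (ex_intro _ _ (ex_intro _ Psi0 (conj I0 (conj s0 erefl)))).
have n0pos : (0 < n0)%N by rewrite -s0 size_poly_gt0.
move: n0pos sPhi minn mind s0; case: n0 => // m _ sPhi minn mind s0.
apply: (@stepB_final Phi m IPhi sPhi).
  move=> Psi IPsi hs; apply/eqP; apply: contraT => nz.
  by exfalso; apply: (minn (size Psi)) => //; exists Psi.
move=> Psi IPsi hs; rewrite dPhi leqNgt; apply/negP => hlt.
by apply: (mind _ hlt); exists Psi.
Qed.

End StepB.

Section StepA.
Variable W : sl2mod.
Local Notation E := (rhoE W).
Local Notation F := (rhoF W).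
Local Notation C := (@casimir W).
Local Notation pa := (@polyact W).
Hypothesis hrat : rational W.

Lemma pa_inj p v : p != 0 -> pa p v = 0 -> v = 0.
Proof. by move=> p0; case: hrat => _ [/(_ p p0) [h _] _]; exact: h. Qed.

Lemma pa_comm p q v : pa p (pa q v) = pa q (pa p v).
Proof. by rewrite !paE -!(actM (okL0 W)) mulrC. Qed.

Lemma pa_act2 p P v : pa p (act2 P v) = act2 P (pa p v).
Proof.
rewrite /act2 (@act_comm _ _ _ _ (okPC W) (pa p)) //.
- by move=> u w; rewrite paE (act_vD (okL0 W)).
- by move=> r u; rewrite pa_comm.
- by move=> u; rewrite C_pa.
Qed.

Definition Iann (P : {poly {poly CC_field}}) := forall v : W, act2 P v = 0.

Lemma Iann_D p q : Iann p -> Iann q -> Iann (p + q).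
Proof. by move=> hp hq v; rewrite /act2 (actD (okPC W)) -/(act2 p v) -/(act2 q v) hp hq addr0. Qed.
Lemma Iann_M p q : Iann q -> Iann (p * q).
Proof. by move=> hq v; rewrite /act2 (actM (okPC W)) -/(act2 q v) hq (act_v0 (okPC W)). Qed.
Lemma Iann_inj c p : c != 0 -> Iann (c%:P * p) -> Iann p.
Proof.
move=> c0 h v; apply: (pa_inj c0); move: (h v).
by rewrite /act2 (act_CM (okPC W)).
Qed.
Lemma Iann_a p : Iann p -> Iann (('X - aZ%:P) * map_poly (sh (-1)) p).
Proof.
move=> hp v; rewrite /act2 mulrC (actM (okPC W)) -/(act2 _ v) act2_a.
by rewrite -/(act2 _ _) -F_act2 hp linear0.
Qed.
Lemma Iann_b p : Iann p -> Iann (('X - bZ%:P) * map_poly (sh 1) p).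
Proof.
move=> hp v; rewrite /act2 mulrC (actM (okPC W)) -/(act2 _ v) act2_b.
by rewrite -/(act2 _ _) -E_act2 hp linear0.
Qed.

Section CH.
Variable D : {poly CC_field}.
Definition TD (v : W) := pa D (C v).

Lemma okTDD : actOK pa TD.
Proof.
split.
- by move=> v; rewrite paE act0.
- by move=> r s v; rewrite !paE (actD (okL0 W)).
- by move=> r u v; rewrite !paE (act_vD (okL0 W)).
- by move=> r a v; rewrite !paE (act_vZ (okL0 W)).
- by move=> v; rewrite paE (act1 (okL0 W)).
- by move=> r s v; rewrite !paE (actM (okL0 W)).
- by move=> r v; rewrite /TD pa_comm C_pa.
- by move=> u v; rewrite /TD CD paE (act_vD (okL0 W)).
- by move=> a v; rewrite /TD CZ paE (act_vZ (okL0 W)).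
Qed.

Lemma iterTDD i v : iter i TD v = pa (D ^+ i) (iter i C v).
Proof.
elim: i => [|i IH] /=; first by rewrite expr0 paE (act1 (okL0 W)).
by rewrite IH /TD C_pa paE -(actM (okL0 W)) exprS.
Qed.

Lemma actTD (p : {poly {poly CC_field}}) v :
  act pa TD p v = act2 (\poly_(i < size p) (p`_i * D ^+ i)) v.
Proof.
rewrite /act2 (@act_bound _ _ _ _ (okPC W) (size p)); last exact: size_poly.
rewrite /act; apply: eq_bigr => i _.
by rewrite coef_poly ltn_ord iterTDD [in RHS]paE (actM (okL0 W)).
Qed.
End CH.

Lemma stepA : exists Psi, Psi != 0 /\ Iann Psi.
Proof.
case: hrat => _ [hinj [n [b [_ hb]]]].
have hb' : forall j : 'I_n, exists pq : {poly CC_field} * ('I_n -> {poly CC_field}),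
    pq.1 != 0 /\ pa pq.1 (C (b j)) = \sum_(k < n) pa (pq.2 k) (b k).
  by move=> j; have [p [q [p0 e]]] := hb (C (b j)) I; exists (p, q).
have [pqf hpq] := fin_all_exists hb'.
pose D := \prod_(j < n) (pqf j).1.
have D0 : D != 0 by apply/prodf_neq0 => j _; case: (hpq j).
pose Q : 'M[{poly CC_field}]_n :=
  \matrix_(j, k) ((\prod_(i < n | i != j) (pqf i).1) * (pqf j).2 k).
have hQ : forall j, TD D (b j) = \sum_(k < n) pa (Q j k) (b k).
  move=> j; rewrite /TD /D (bigD1 j) //= mulrC paE (actM (okL0 W)) -!paE.
  rewrite (proj2 (hpq j)) paE (act_vsum (okL0 W)); apply: eq_bigr => k _.
  by rewrite mxE [in RHS]paE (actM (okL0 W)).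
pose N := char_poly_mx Q.
have hN : forall j, \sum_(k < n) act pa (TD D) (N j k) (b k) = 0.
  move=> j; rewrite /N /char_poly_mx.
  under eq_bigr => k _ do rewrite !mxE (actB (okTDD D)) (actC (okTDD D)).
  rewrite sumrB (bigD1 j) //= big1 => [|k /negbTE nk]; last first.
    by rewrite eq_sym nk mulr0n act0.
  rewrite eqxx mulr1n (actX (okTDD D)) addr0 hQ; apply/eqP; rewrite subr_eq0; apply/eqP.
  by apply: eq_bigr => k _; rewrite mxE.
have hchar : forall k, act pa (TD D) (char_poly Q) (b k) = 0.
  move=> k.
  have e1 : act pa (TD D) (char_poly Q) (b k) =
      \sum_(l < n) act pa (TD D) (((\det N)%:M : 'M_n) k l) (b l).
    rewrite (bigD1 k) //= big1 => [|l /negbTE nl]; last first.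
      by rewrite mxE eq_sym nl mulr0n act0.
    by rewrite mxE eqxx mulr1n addr0.
  rewrite e1 -mul_adj_mx.
  under eq_bigr => l _ do rewrite !mxE (actsum (okTDD D)).
  rewrite exchange_big /= big1 // => j _.
  under eq_bigr => l _ do rewrite (actM (okTDD D)).
  by rewrite -(act_vsum (okTDD D)) hN (act_v0 (okTDD D)).
pose Psi := \poly_(i < size (char_poly Q)) ((char_poly Q)`_i * D ^+ i).
exists Psi; split.
  apply/eqP => P0; have := congr1 (fun q : {poly {poly CC_field}} => q`_n) P0.
  rewrite /Psi coef_poly size_char_poly ltnSn coef0.
  have := char_poly_monic Q; rewrite monicE lead_coefE size_char_poly /= => /eqP ->.
  by rewrite mul1r => /eqP; rewrite expf_eq0 (negbTE D0) andbF.
move=> v; have [p [q [p0 e]]] := hb v I.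
apply: (pa_inj p0); rewrite pa_act2 e /act2 (act_vsum (okPC W)) big1 // => k _.
by rewrite -/(act2 _ _) -pa_act2 /Psi -actTD hchar paE (act_v0 (okL0 W)).
Qed.

Lemma stepAB : exists P : {poly CC_field}, P != 0 /\
  forall v, act (@scaleA W) C P v = 0.
Proof.
have [P [P0 hP]] := stepB Iann_D Iann_M Iann_inj Iann_a Iann_b stepA.
exists P; split=> // v; move: (hP v).
rewrite /act2 (@act_bound _ _ _ _ (okPC W) (size P)) ?size_map_polyC //.
rewrite /act; under eq_bigr => i _ do rewrite coef_map /= paE (actC (okL0 W)).
by [].
Qed.

End StepA.

Section StepC.
Variable W : sl2mod.
Local Notation E := (rhoE W).
Local Notation F := (rhoF W).
Local Notation H := (rhoH W).
Local Notation L0 := (@L0 W).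
Local Notation C := (@casimir W).
Local Notation pa := (@polyact W).
Local Notation pC := (act (@scaleA W) C).

Lemma CN (v : W) : C (- v) = - C v.
Proof. by rewrite -scaleN1r CZ scaleN1r. Qed.

Lemma C_H (v : W) : C (H v) = H (C v).
Proof. by rewrite !HL0 CN CZ C_L0. Qed.

Lemma pC_comm (S : W -> W) p v :
  (forall u w, S (u + w) = S u + S w) -> (forall (c : CC_field) u, S (c *: u) = c *: S u) ->
  (forall u, S (C u) = C (S u)) -> S (pC p v) = pC p (S v).
Proof.
move=> SD SZ SC; apply: (act_comm (okCs W)) => //.

Qed.

Lemma pC_E p v : E (pC p v) = pC p (E v).
Proof. apply: pC_comm; [by move=> u w; rewrite linearD | by move=> c u; rewrite linearZ | by move=> u; rewrite C_E]. Qed.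
Lemma pC_F p v : F (pC p v) = pC p (F v).
Proof. apply: pC_comm; [by move=> u w; rewrite linearD | by move=> c u; rewrite linearZ | by move=> u; rewrite C_F]. Qed.
Lemma pC_H p v : H (pC p v) = pC p (H v).
Proof. apply: pC_comm; [by move=> u w; rewrite linearD | by move=> c u; rewrite linearZ | by move=> u; rewrite C_H]. Qed.
Lemma pC_pa p q v : pa q (pC p v) = pC p (pa q v).
Proof.
apply: pC_comm.
- by move=> u w; rewrite paE (act_vD (okL0 W)).
- by move=> c u; rewrite paE (act_vZ (okL0 W)).
- by move=> u; rewrite C_pa.
Qed.

Lemma pC_exp (c : CC_field) k v :
  pC (('X - c%:P) ^+ k) v = iter k (fun w => C w - c *: w) v.
Proof.
elim: k v => [|k IH] v; first by rewrite expr0 (act1 (okCs W)).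
rewrite exprS (actM (okCs W)) IH /= (actB (okCs W)) (actX (okCs W)) (actC (okCs W)).
by rewrite /scaleA.
Qed.

Lemma pC_comm2 p q v : pC p (pC q v) = pC q (pC p v).
Proof. by rewrite -!(actM (okCs W)) mulrC. Qed.

Lemma split2 (A B : {poly CC_field}) v : coprimep A B -> pC (A * B) v = 0 ->
  exists v1 v2, v = v1 + v2 /\ pC A v1 = 0 /\ pC B v2 = 0.
Proof.
move=> /Bezout_eq1_coprimepP [[u1 u2] /= hu] hv.
exists (pC (u2 * B) v), (pC (u1 * A) v); split; last split.
- by rewrite -(actD (okCs W)) addrC hu (act1 (okCs W)).
- by rewrite -(actM (okCs W)) mulrCA (actM (okCs W)) hv (act_v0 (okCs W)).
- by rewrite -(actM (okCs W)) mulrCA [B * A]mulrC (actM (okCs W)) hv (act_v0 (okCs W)).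
Qed.

Lemma uniq2 (A B : {poly CC_field}) v : coprimep A B -> pC A v = 0 -> pC B v = 0 -> v = 0.
Proof.
move=> /Bezout_eq1_coprimepP [[u1 u2] /= hu] hA hB.
rewrite -(act1 (okCs W) v) -hu (actD (okCs W)) !(actM (okCs W)) hA hB.
by rewrite !(act_v0 (okCs W)) addr0.
Qed.

Variable kap : CC_field -> nat.
Definition Af (z : CC_field) : {poly CC_field} := ('X - z%:P) ^+ kap z.
Definition Qs (s : seq CC_field) : {poly CC_field} := \prod_(z <- s) Af z.

Lemma coprime_AQ z s : z \notin s -> coprimep (Af z) (Qs s).
Proof.
move=> zs; apply: coprimep_expl; rewrite coprimep_sym coprimep_XsubC.
rewrite /root /Qs horner_prod prodf_seq_neq0; apply/allP => y ys /=.
rewrite /Af horner_exp hornerD hornerN hornerX hornerC expf_neq0 // subr_eq0.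
by apply: contraNneq zs => ->.
Qed.

Lemma pC_Qs_mem s x w : x \in s -> pC (Af x) w = 0 -> pC (Qs s) w = 0.
Proof.
move=> xs hw; rewrite /Qs (big_rem x xs) /= mulrC (actM (okCs W)) hw.
exact: (act_v0 (okCs W)).
Qed.

Lemma decomp s : uniq s -> forall v, pC (Qs s) v = 0 ->
  exists ws : 'I_(size s) -> W,
    (forall i : 'I_(size s), pC (Af (nth 0 s i)) (ws i) = 0) /\ v = \sum_i ws i.
Proof.
elim: s => [|z s IH] /=.
  move=> _ v; rewrite /Qs big_nil (act1 (okCs W)) => ->; exists (fun _ => 0).
  by split; [case | rewrite big_ord0].
move=> /andP [zs us] v; rewrite /Qs big_cons -/(Qs s) => hv.
have [v1 [v2 [-> [h1 h2]]]] := split2 (coprime_AQ zs) hv.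
have [ws' [hws' ->]] := IH us v2 h2.
exists (fun i : 'I_(size s).+1 => if unlift ord0 i is Some j then ws' j else v1).
split; last by rewrite big_ord_recl /= unlift_none; congr (_ + _); apply: eq_bigr => j _; rewrite liftK.
move=> i; case: unliftP => [j ->|->] //=; first by rewrite add0n; exact: hws'.
Qed.

Lemma uniqdec s : uniq s -> forall ws : 'I_(size s) -> W,
  (forall i : 'I_(size s), pC (Af (nth 0 s i)) (ws i) = 0) -> \sum_i ws i = 0 -> forall i, ws i = 0.
Proof.
elim: s => [|z s IH] /=; first by move=> _ ws _ _ [].
move=> /andP [zs us] ws hws; rewrite big_ord_recl => hsum.
set y := \sum_(j < size s) ws (lift ord0 j).
have hy : pC (Qs s) y = 0.
  rewrite /y (act_vsum (okCs W)) big1 // => j _.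
  apply: (@pC_Qs_mem _ (nth 0 s j)); first by rewrite mem_nth.
  by have := hws (lift ord0 j); rewrite lift0.
have w0 : ws ord0 = - y by apply/eqP; rewrite -addr_eq0 hsum.
have z0 : ws ord0 = 0.
  apply: (uniq2 (coprime_AQ zs)); first exact: (hws ord0).
  by rewrite w0 (act_vN (okCs W)) hy oppr0.
have y0 : y = 0 by apply/eqP; rewrite -oppr_eq0 -w0 z0.
have IH' := IH us (fun j => ws (lift ord0 j)).
move=> i; case: (unliftP ord0 i) => [j ->|->] //.
by apply: IH' => // k; have := hws (lift ord0 k); rewrite lift0.
Qed.

End StepC.

Lemma sum_delta (V : zmodType) r (i : 'I_r) (x : V) :
  \sum_(l < r) (if l == i then x else 0) = x.
Proof. by rewrite (bigD1 i) //= eqxx big1 ?addr0 // => l /negbTE ->. Qed.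

Lemma part1 (W : sl2mod) : rational W ->
     exists (r : nat) (mu : 'I_r -> CC_field) (Ws : 'I_r -> W -> Prop),
       (forall i j, mu i = mu j -> i = j) /\
       (forall i, rational_on (Ws i) /\ gen_casimir_on (mu i) (Ws i)) /\
       (forall w : W, exists ws : 'I_r -> W,
          (forall i, Ws i (ws i)) /\ w = \sum_(i < r) ws i) /\
       (forall ws : 'I_r -> W, (forall i, Ws i (ws i)) ->
          \sum_(i < r) ws i = 0 -> forall i, ws i = 0).
Proof.
move=> hrat.
have [P [P0 hP]] := stepAB hrat.
have [rs hrs] := closed_field_poly_normal P.
pose kap z := count_mem z rs.
pose us := undup rs.
have hQ : forall v, act (@scaleA W) (@casimir W) (Qs kap us) v = 0.
  have eQ : Qs kap us = \prod_(z <- rs) ('X - z%:P).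
    rewrite /Qs /Af -(big_undup_iterop_count _ rs); apply: eq_bigr => z _.
    by rewrite Monoid.iteropE iter_mulr_1.
  move=> v; have := hP v; rewrite {1}hrs -mul_polyC (act_CM (okCs W)) /scaleA -eQ.
  by move/eqP; rewrite scaler_eq0 lead_coef_eq0 (negbTE P0) /= => /eqP.
have hdec := @decomp W kap us (undup_uniq rs) .
have huniq := @uniqdec W kap us (undup_uniq rs).
exists (size us), (fun i => nth 0 us i),
  (fun i v => act (@scaleA W) (@casimir W) (Af kap (nth 0 us i)) v = 0).
split.
  by move=> i j /eqP; rewrite nth_uniq ?undup_uniq // => /eqP /val_inj.
split; last first.
  split; last exact: huniq.
  by move=> w; exact: hdec (hQ w).
move=> i; set A := Af kap (nth 0 us i); split; last first.
  exists (kap (nth 0 us i)); split.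
    by rewrite /kap -has_count has_pred1 -mem_undup mem_nth.
  by move=> v hv; rewrite -pC_exp.
case: hrat => _ [hsurj [n [b [_ hb]]]].
split; [|split].
- split.
  + exact: (act_v0 (okCs W)).
  + by move=> u v hu hv; rewrite (act_vD (okCs W)) hu hv addr0.
  + by move=> a v hv; rewrite (act_vZ (okCs W)) hv scaler0.
  + by move=> v hv; rewrite -pC_E -pC_F -pC_H hv !linear0.
- move=> p p0; split; first by move=> v _; case: (hsurj p p0) => h _; exact: h.
  move=> w hw; have [v0 [_ hv0]] := (proj2 (hsurj p p0)) w I.
  have [ws [hws ev0]] := hdec v0 (hQ v0).
  exists (ws i); split; first exact: hws.
  pose ws' := fun j => polyact p (ws j) - (if j == i then w else 0).
  have := huniq ws' _ _ i; rewrite /ws' eqxx => h; apply/eqP; rewrite -subr_eq0; apply/eqP; apply: h.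
    move=> j; rewrite (act_vB (okCs W)) -pC_pa (hws j) paE (act_v0 (okL0 W)) sub0r.
    by case: eqP => [->|_]; rewrite ?hw ?(act_v0 (okCs W)) oppr0.
  rewrite sumrB sum_delta; apply/eqP; rewrite subr_eq0; apply/eqP.
  by rewrite -hv0 ev0 paE (act_vsum (okL0 W)).
- have hbd : forall j : 'I_n, exists ws : 'I_(size us) -> W,
      (forall l : 'I_(size us), act (@scaleA W) (@casimir W) (Af kap (nth 0 us l)) (ws l) = 0) /\
      b j = \sum_l ws l.
    by move=> j; exact: hdec (hQ (b j)).
  have [bs hbs] := fin_all_exists hbd.
  exists n, (fun j => bs j i); split; first by move=> j; exact: (proj1 (hbs j) i).
  move=> v hv; have [p [q [p0 e]]] := hb v I.
  exists p, q; split=> //.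
  pose ws' := fun l => \sum_(j < n) polyact (q j) (bs j l) - (if l == i then polyact p v else 0).
  have := huniq ws' _ _ i; rewrite /ws' eqxx => h; apply/eqP; rewrite eq_sym -subr_eq0; apply/eqP; apply: h.
    move=> l; rewrite (act_vB (okCs W)) (act_vsum (okCs W)) big1 ?sub0r.
      case: eqP => [->|_]; last by rewrite (act_v0 (okCs W)) oppr0.
      by rewrite -pC_pa hv paE (act_v0 (okL0 W)) oppr0.
    by move=> j _; rewrite -pC_pa (proj1 (hbs j) l) paE (act_v0 (okL0 W)).
  rewrite sumrB sum_delta exchange_big /= e; apply/eqP; rewrite subr_eq0; apply/eqP.
  by apply: eq_bigr => j _; rewrite (proj2 (hbs j)) paE (act_vsum (okL0 W)).
Qed.

Lemma phi_L0 (A B : sl2mod) (phi : {linear A -> B}) : sl2hom phi ->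
  forall v, phi (L0 v) = L0 (phi v).
Proof. by move=> h v; rewrite /L0 linearZ /=; case: (h v) => _ _ ->. Qed.

Lemma phi_C (A B : sl2mod) (phi : {linear A -> B}) : sl2hom phi ->
  forall v, phi (casimir v) = casimir (phi v).
Proof.
move=> h v; rewrite /casimir /Lm1 /L1 linearB /= !(phi_L0 h) linearB /=.
rewrite (phi_L0 h); case: (h (- rhoE A v)) => _ -> _; rewrite linearN /=.
by case: (h v) => -> _ _.
Qed.

Lemma gen_eig (B : sl2mod) (mu nu : CC_field) m : mu <> nu ->
  (forall w : B, iter m (fun x => casimir x - nu *: x) w = 0) ->
  forall k (w : B), iter k (fun x => casimir x - mu *: x) w = 0 -> w = 0.
Proof.
move=> mn hB; elim=> [|k IH] w //.
rewrite iterSr => /IH /eqP; rewrite subr_eq0 => /eqP hC.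
have hj : forall j, iter j (fun x => casimir x - nu *: x) w = (mu - nu) ^+ j *: w.
  elim=> [|j IHj] /=; first by rewrite scale1r.
  rewrite IHj CZ hC !scalerA -scalerBl; congr (_ *: _).
  by rewrite exprSr; ring.
move: (hB w); rewrite hj => /eqP; rewrite scaler_eq0 expf_eq0 subr_eq0.
by case/orP => [/andP [_ /eqP]|/eqP] //.
Qed.

Lemma hom_orth (mu nu : CC_field) (A B : sl2mod) : mu <> nu ->
     in_RCgen mu A -> in_RCgen nu B ->
     forall phi : {linear A -> B}, sl2hom phi -> forall a : A, phi a = 0.
Proof.
move=> mn [_ [n [_ hA]]] [_ [m [_ hB]]] phi hphi a.
apply: (@gen_eig B mu nu m mn (fun w => hB w I) n).
have <- : phi (iter n (fun x => casimir x - mu *: x) a) = iter n (fun x => casimir x - mu *: x) (phi a).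
  elim: n {hA} => //= n <-.
  by rewrite linearB linearZ /= (phi_C hphi).
by rewrite hA // linear0.
Qed.

Theorem theorem6p8 :
  (* every rational module is a finite direct sum of generalized Casimir
     rational submodules of pairwise distinct levels *)
  (forall W : sl2mod, rational W ->
     exists (r : nat) (mu : 'I_r -> CC_field) (Ws : 'I_r -> W -> Prop),
       (forall i j, mu i = mu j -> i = j) /\
       (forall i, rational_on (Ws i) /\ gen_casimir_on (mu i) (Ws i)) /\
       (forall w : W, exists ws : 'I_r -> W,
          (forall i, Ws i (ws i)) /\ w = \sum_(i < r) ws i) /\
       (forall ws : 'I_r -> W, (forall i, Ws i (ws i)) ->
          \sum_(i < r) ws i = 0 -> forall i, ws i = 0)) /\
  (* Hom-orthogonality *)
  (forall (mu nu : CC_field) (A B : sl2mod), mu <> nu ->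
     in_RCgen mu A -> in_RCgen nu B ->
     forall phi : {linear A -> B}, sl2hom phi -> forall a : A, phi a = 0) /\
  (* compatibility: RC_mu is contained in RC^bullet_mu *)
  (forall (mu : CC_field) (M : sl2mod), in_RC mu M -> in_RCgen mu M).
Proof.
split; first exact: part1.
split; first exact: hom_orth.
move=> mu M [hr hc]; split=> //; exists 1%N; split=> // v _ /=.
by rewrite hc // subrr.
Qed.
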